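(* Let $X\subset\mathbb{R}^n$ be nonempty convex compact with $\|x_1-x_2\|_2\le D_X$, $c\in(0,1]$, $f(x)=\mathbb{E}[F(x,\xi)]$ $L_f$-Lipschitz on $X$, with oracle samples satisfying $\mathbb{E}\|F'(x,\xi)-f'(x)\|_2^2\le\sigma_f^2$ and $\mathbb{E}[(F(x,\xi)-f(x))^2]\le\beta^2$. Let $\delta>0$ and let $Y_\delta\subset\mathbb{R}$ be an interval of length $2(L_fD_X+\delta)$ such that $f(x)\in Y_\delta$ for all $x\in X$; let $\Lambda=[0,1]$. For $z>0$ define $\mathcal{L}'_x=\frac{2c}{z}(F(x,\xi)-y)_+F'(x,\xi)+\lambda F'(x,\xi)$, $\mathcal{L}'_y=-\frac{2c}{z}(F(x,\xi)-y)_++1-\lambda$, $\mathcal{L}'_z=-\frac c{z^2}(F(x,\xi)-y)_+^2+\frac c4$, $\mathcal{L}'_\lambda=F(x,\xi)-y$. Then for any $x\in X$, $y\in Y_\delta$, $z>0$, $\lambda\in\Lambda$: (a) $\mathbb{E}[(\mathcal{L}'_y)^2]\le\frac{12c^2}{z^2}[\beta^2+4(L_fD_X+\delta)^2]+3$; (b) $\mathbb{E}[(\mathcal{L}'_\lambda)^2]\le2\beta^2+8(L_fD_X+\delta)^2$; if moreover $\mathbb{E}[(F(x,\xi)-f(x))_+^4]\le M_f^4$ for all $x\in X$, then (d) $\mathbb{E}[(\mathcal{L}'_z)^2]\le\frac{12c^2}{z^4}[M_f^4+16(L_fD_X+\delta)^4]+\frac{3c^2}{16}$; and if, with $G(x,\xi)=(F(x,\xi)-f(x))_+^2$,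 $\mathbb{E}\|G'(x,\xi)\|_2^2\le L_G^2$ for all $x\in X$, then (c) $\mathbb{E}\|\mathcal{L}'_x\|_2^2\le\frac{3c^2}{z^2}[L_G^2+4L_f^2\beta^2+64(L_f^2+\sigma_f^2)(L_fD_X+\delta)^2]+12(L_f^2+\sigma_f^2)$.
   Context: $(a)_+=\max\{a,0\}$. $F(\cdot,\xi)$ is convex; $F'(x,\xi)$ is a stochastic subgradient returned by an oracle, unbiased for a subgradient $f'(x)$ of $f$; $F(x,\xi)$ is unbiased for $f(x)$. *)

(* Defs.v *)
From HB Require Import structures.
From mathcomp Require Import all_boot all_order all_algebra.
From mathcomp Require Import all_classical all_reals all_analysis.
Set Implicit Arguments. Unset Strict Implicit. Unset Printing Implicit Defensive.
Import Order.TTheory GRing.Theory Num.Theory.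
Import numFieldNormedType.Exports.
Local Open Scope ring_scope.
Local Open Scope classical_set_scope.

Section Defs.
Variable R : realType.

Definition pos_part (a : R) : R := Num.max a 0.

Definition dotv n (u v : 'rV[R]_n) : R := \sum_(i < n) u ord0 i * v ord0 i.
Definition sqnorm n (u : 'rV[R]_n) : R := dotv u u.
Definition enorm n (u : 'rV[R]_n) : R := Num.sqrt (sqnorm u).

Definition Lx n (c z lam y Fv : R) (Fd : 'rV[R]_n) : 'rV[R]_n :=
  (2 * c / z * pos_part (Fv - y)) *: Fd + lam *: Fd.
Definition Ly (c z lam y Fv : R) : R :=
  - (2 * c / z) * pos_part (Fv - y) + 1 - lam.
Definition Lz (c z y Fv : R) : R :=
  - (c / z ^+ 2) * pos_part (Fv - y) ^+ 2 + c / 4.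
Definition Llam (y Fv : R) : R := Fv - y.

(* stochastic gradient of G(x,xi) = (F(x,xi) - f(x))_+^2 (chain rule) *)
Definition Gd n (Fv fv : R) (Fd fd : 'rV[R]_n) : 'rV[R]_n :=
  (2 * pos_part (Fv - fv)) *: (Fd - fd).

End Defs.

(* Main.v *)
Require Import Defs.
From HB Require Import structures.
From mathcomp Require Import all_boot all_order all_algebra.
From mathcomp Require Import all_classical all_reals all_analysis.
From mathcomp Require Import measurable_realfun lebesgue_measure.
From mathcomp Require Import ring lra.
Import Order.TTheory GRing.Theory Num.Theory.
Import numFieldNormedType.Exports.
Local Open Scope ring_scope.
Local Open Scope classical_set_scope.

Section H.

Variable R : realType.

Lemma eq_leR (u v : R) : u = v -> u <= v.
Proof. by move=> ->. Qed.

Lemma ppE (r : R) : pos_part r = if r < 0 then 0 else r.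
Proof. by []. Qed.

Lemma pp_ge0 (r : R) : 0 <= pos_part r.
Proof. rewrite ppE; case: ltP => h; lra. Qed.

Lemma pp_ge (r : R) : r <= pos_part r.
Proof. rewrite ppE; case: ltP => h; lra. Qed.

Lemma pp_sq (r : R) : pos_part r ^+ 2 <= r ^+ 2.
Proof. by rewrite ppE; case: ltP => _; rewrite ?expr0n ?sqr_ge0. Qed.

Lemma pp_le (r1 r2 k : R) : r1 <= r2 + k -> 0 <= k -> pos_part r1 <= pos_part r2 + k.
Proof. rewrite !ppE => h k0; case: ltP => h1; case: ltP => h2; lra. Qed.

Lemma sqnorm_ge0 n (u : 'rV[R]_n) : 0 <= sqnorm u.
Proof. by apply: sumr_ge0 => i _; rewrite -expr2 sqr_ge0. Qed.

Lemma sqnormZ n (k : R) (u : 'rV[R]_n) : sqnorm (k *: u) = k ^+ 2 * sqnorm u.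
Proof.
rewrite /sqnorm /dotv mulr_sumr; apply: eq_bigr => i _; rewrite !mxE; ring.
Qed.

Lemma sqnormD n (u v : 'rV[R]_n) : sqnorm (u + v) <= 2 * sqnorm u + 2 * sqnorm v.
Proof.
rewrite /sqnorm /dotv !mulr_sumr -big_split /=; apply: ler_sum => i _.
rewrite !mxE; set p := u _ _; set q := v _ _; have := sqr_ge0 (p - q); nra.
Qed.

Lemma Ecst d (T : measurableType d) (P : probability T R) (b : R) :
  (\int[P]_w (b%:E) = b%:E)%E.
Proof.
move: (integral_cst P measurableT b%:E) => ->. rewrite -[RHS]mule1; congr (_ * _)%E; exact: probability_setT.
Qed.

Lemma int_bound d (T : measurableType d) (P : probability T R)
  (g h1 h2 h3 : T -> R) (a1 a2 a3 b B1 B2 B3 Tg : R) :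
  measurable_fun setT g -> measurable_fun setT h1 -> measurable_fun setT h2 ->
  measurable_fun setT h3 ->
  (forall w, 0 <= g w) -> (forall w, 0 <= h1 w) -> (forall w, 0 <= h2 w) ->
  (forall w, 0 <= h3 w) ->
  0 <= a1 -> 0 <= a2 -> 0 <= a3 -> 0 <= b ->
  (forall w, g w <= a1 * h1 w + a2 * h2 w + a3 * h3 w + b) ->
  (\int[P]_w (h1 w)%:E <= B1%:E)%E ->
  (\int[P]_w (h2 w)%:E <= B2%:E)%E ->
  (\int[P]_w (h3 w)%:E <= B3%:E)%E ->
  a1 * B1 + a2 * B2 + a3 * B3 + b <= Tg ->
  (\int[P]_w (g w)%:E <= Tg%:E)%E.
Proof.
have hZ : forall a (h : T -> R), 0 <= a -> (forall w, 0 <= h w) ->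
   measurable_fun setT h ->
   (\int[P]_w (a * h w)%:E = a%:E * \int[P]_w (h w)%:E)%E.
  move=> a h a0 h0 mh; rewrite -ge0_integralZl_EFin //.
  - by move=> w _; rewrite lee_fin.
  - by apply/measurable_EFinP.
move=> mg m1 m2 m3 g0 p1 p2 p3 a10 a20 a30 b0 gle I1 I2 I3 hT.
have mE : forall h : T -> R, measurable_fun setT h ->
   measurable_fun [set: T] (EFin \o h) by move=> h mh; apply/measurable_EFinP.
apply: (@le_trans _ _ (\int[P]_w ((a1 * h1 w)%:E + (a2 * h2 w)%:E + (a3 * h3 w)%:E + b%:E))%E).
  apply: ge0_le_integral => //.
  - by move=> w _; rewrite lee_fin.
  - exact: mE.
  - apply/measurable_EFinP.
    apply: measurable_funD; last exact: measurable_cst.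
    apply: measurable_funD; last exact: measurable_funM (measurable_cst _) m3.
    apply: measurable_funD; first exact: measurable_funM (measurable_cst _) m1.
    exact: measurable_funM (measurable_cst _) m2.
  - by move=> w _; rewrite -!EFinD lee_fin.
have q1 : forall w, (0 <= (a1 * h1 w)%:E)%E by move=> w; rewrite lee_fin mulr_ge0.
have q2 : forall w, (0 <= (a2 * h2 w)%:E)%E by move=> w; rewrite lee_fin mulr_ge0.
have q3 : forall w, (0 <= (a3 * h3 w)%:E)%E by move=> w; rewrite lee_fin mulr_ge0.
have mM : forall a (h : T -> R), measurable_fun setT h ->
   measurable_fun [set: T] (EFin \o (fun w => a * h w)).
  by move=> a h mh; apply: mE; exact: measurable_funM (measurable_cst _) mh.
have qb : forall w : T, (0 <= b%:E)%E by move=> w; rewrite lee_fin.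
rewrite ge0_integralD //;
  try (by move=> w _; repeat apply: adde_ge0);
  try (by repeat apply: emeasurable_funD; try exact: mM; exact: measurable_cst).
rewrite ge0_integralD //;
  try (by move=> w _; repeat apply: adde_ge0);
  try (by repeat apply: emeasurable_funD; try exact: mM; exact: measurable_cst).
rewrite ge0_integralD //;
  try (by move=> w _; repeat apply: adde_ge0);
  try (by repeat apply: emeasurable_funD; try exact: mM; exact: measurable_cst).
rewrite Ecst.
rewrite (hZ a1 h1) // (hZ a2 h2) // (hZ a3 h3) //.
apply: (@le_trans _ _ (a1%:E * B1%:E + a2%:E * B2%:E + a3%:E * B3%:E + b%:E)%E).
  apply: leeD => //; apply: leeD; [apply: leeD|]; apply: lee_pmul => //;
  try (by rewrite lee_fin); apply: integral_ge0 => w _; rewrite lee_fin;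
  first [exact: p1 | exact: p2 | exact: p3].
by rewrite -!EFinM -!EFinD lee_fin.
Qed.


Lemma rb (u fx y K : R) : - (2 * K) <= fx - y <= 2 * K ->
  (u - y) ^+ 2 <= 2 * (u - fx) ^+ 2 + 8 * K ^+ 2.
Proof.
move=> /andP[h1 h2].
have e1 : (fx - y) ^+ 2 <= 4 * K ^+ 2 by nra.
have := sqr_ge0 ((u - fx) - (fx - y)); nra.
Qed.

Lemma ra (u fx y K A Q lam : R) : 0 <= A -> A ^+ 2 = 4 * Q -> 0 <= lam <= 1 ->
  - (2 * K) <= fx - y <= 2 * K ->
  (- A * pos_part (u - y) + 1 - lam) ^+ 2 <=
    12 * Q * (u - fx) ^+ 2 + (12 * Q * (4 * K ^+ 2) + 3).
Proof.
move=> A0 AQ /andP[l0 l1] hK.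
have Q0 : 0 <= Q by have := sqr_ge0 A; lra.
have p0 := pp_ge0 (u - y); have ps := pp_sq (u - y); have hb := @rb u fx y K hK.
set p := pos_part (u - y) in p0 ps *.
have Ap : 0 <= A * p by apply: mulr_ge0.
have e1 : (- A * p + 1 - lam) ^+ 2 <= (A * p) ^+ 2 + 1 by nra.
have e2 : (A * p) ^+ 2 = 4 * Q * p ^+ 2 by rewrite exprMn AQ.
have e3 : 4 * Q * p ^+ 2 <= 4 * Q * (2 * (u - fx) ^+ 2 + 8 * K ^+ 2).
  apply: ler_wpM2l; [lra | exact: le_trans ps hb].
have := sqr_ge0 (u - fx); nra.
Qed.

Lemma p4 (p q K : R) : 0 <= p -> 0 <= q -> p <= q + 2 * K -> 0 <= K ->
  p ^+ 4 <= 8 * q ^+ 4 + 128 * K ^+ 4.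
Proof.
move=> p0 q0 pq K0.
have e1 : p ^+ 2 <= 2 * q ^+ 2 + 8 * K ^+ 2.
  have : p ^+ 2 <= (q + 2 * K) ^+ 2 by nra.
  have := sqr_ge0 (q - 2 * K); nra.
have e2 : p ^+ 4 <= (2 * q ^+ 2 + 8 * K ^+ 2) ^+ 2.
  rewrite (_ : 4 = 2 + 2)%N // exprD; rewrite [X in _ <= X]expr2.
  apply: ler_pM => //; exact: sqr_ge0.
have := sqr_ge0 (q ^+ 2 - 4 * K ^+ 2).
rewrite (_ : 4 = 2 * 2)%N // !exprM in e2 *.
nra.
Qed.

Lemma rd (u fx y K t C : R) : 0 <= t -> 0 <= C -> 0 <= K ->
  fx - y <= 2 * K ->
  (- t * pos_part (u - y) ^+ 2 + C) ^+ 2 <=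
    12 * t ^+ 2 * pos_part (u - fx) ^+ 4 + (12 * t ^+ 2 * (16 * K ^+ 4) + 3 * C ^+ 2).
Proof.
move=> t0 C0 K0 hK.
have p0 := pp_ge0 (u - y); have q0 := pp_ge0 (u - fx).
have pq : pos_part (u - y) <= pos_part (u - fx) + 2 * K.
  apply: pp_le => //; lra.
have h4 := @p4 _ _ K p0 q0 pq K0.
set p := pos_part (u - y) in p0 pq h4 *; set q := pos_part (u - fx) in q0 pq h4 *.
have tp : 0 <= t * p ^+ 2 by apply: mulr_ge0 => //; exact: sqr_ge0.
have e1 : (- t * p ^+ 2 + C) ^+ 2 <= t ^+ 2 * p ^+ 4 + C ^+ 2.
  rewrite (_ : 4 = 2 * 2)%N // exprM; nra.
have e2 : t ^+ 2 * p ^+ 4 <= t ^+ 2 * (8 * q ^+ 4 + 128 * K ^+ 4).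
  by apply: ler_wpM2l => //; exact: sqr_ge0.
have := sqr_ge0 t; have := sqr_ge0 C.
have : 0 <= q ^+ 4 by apply: exprn_ge0.
have : 0 <= K ^+ 4 by apply: exprn_ge0.
nra.
Qed.

Lemma rc n (u fx y K A Q lam Lf : R) (V g : 'rV[R]_n) :
  0 <= A -> A ^+ 2 = 4 * Q -> 0 <= lam <= 1 -> 0 <= K -> fx - y <= 2 * K ->
  sqnorm g <= Lf ^+ 2 ->
  sqnorm ((A * pos_part (u - y)) *: V + lam *: V) <=
   3 * Q * sqnorm (Gd u fx V g) + 12 * Q * Lf ^+ 2 * (u - fx) ^+ 2
   + (192 * Q * K ^+ 2 + 12) * sqnorm (V - g)
   + (192 * Q * K ^+ 2 + 12) * Lf ^+ 2.
Proof.
move=> A0 AQ /andP[l0 l1] K0 hK hg.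
have Q0 : 0 <= Q by have := sqr_ge0 A; lra.
have p0 := pp_ge0 (u - y); have q0 := pp_ge0 (u - fx).
have pq : pos_part (u - y) <= pos_part (u - fx) + 2 * K.
  apply: pp_le => //; lra.
have qs := pp_sq (u - fx).
rewrite /Gd -scalerDl !sqnormZ.
have hN : sqnorm V <= 2 * sqnorm (V - g) + 2 * Lf ^+ 2.
  have := @sqnormD _ (V - g) g; rewrite subrK; lra.
have E0 := @sqnorm_ge0 _ (V - g); have N0 := @sqnorm_ge0 _ V.
set p := pos_part (u - y) in p0 pq *; set q := pos_part (u - fx) in q0 pq qs *.
set N := sqnorm V in hN N0 *; set E := sqnorm (V - g) in hN E0 *.
have e1 : p ^+ 2 <= 5 / 4 * q ^+ 2 + 20 * K ^+ 2.
  have : p ^+ 2 <= (q + 2 * K) ^+ 2 by nra.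
  have := sqr_ge0 (q / 2 - 4 * K); nra.
have e2 : (A * p + lam) ^+ 2 <= 6 / 5 * (A * p) ^+ 2 + 6 * lam ^+ 2.
  have := sqr_ge0 (A * p - 5 * lam); nra.
have e3 : (A * p + lam) ^+ 2 <= 6 * Q * q ^+ 2 + 96 * Q * K ^+ 2 + 6.
  rewrite exprMn AQ in e2.
  have : 4 * Q * p ^+ 2 <= 4 * Q * (5 / 4 * q ^+ 2 + 20 * K ^+ 2).
    by apply: ler_wpM2l => //; lra.
  nra.
have m0 : 0 <= (A * p + lam) ^+ 2 by exact: sqr_ge0.
have e4 : (A * p + lam) ^+ 2 * N <= (6 * Q * q ^+ 2 + 96 * Q * K ^+ 2 + 6) * (2 * E + 2 * Lf ^+ 2).
  apply: ler_pM => //.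
have q2 : 0 <= q ^+ 2 by exact: sqr_ge0.
have K2 : 0 <= K ^+ 2 by exact: sqr_ge0.
have L2 : 0 <= Lf ^+ 2 by exact: sqr_ge0.
have e5 : Q * Lf ^+ 2 * q ^+ 2 <= Q * Lf ^+ 2 * (u - fx) ^+ 2.
  by apply: ler_wpM2l => //; apply: mulr_ge0.
rewrite exprMn.
nra.
Qed.

Lemma meas_pp d (T : measurableType d) (h : T -> R) :
  measurable_fun setT h -> measurable_fun setT (fun w => pos_part (h w)).
Proof. by move=> mh; exact: measurable_maxr mh (measurable_cst _). Qed.

Lemma meas_sqnorm d (T : measurableType d) n (v : T -> 'rV[R]_n) :
  (forall i, measurable_fun setT (fun w => v w ord0 i)) ->
  measurable_fun setT (fun w => sqnorm (v w)).
Proof.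
move=> mv; rewrite /sqnorm /dotv.
apply: (@measurable_sum _ _ _ _ _ _ (fun i w => v w ord0 i * v w ord0 i)) => i.
exact: measurable_funM.
Qed.

Lemma meas_coord d (T : measurableType d) n (v : T -> 'rV[R]_n) i (e : T -> R) :
  (forall w, v w ord0 i = e w) -> measurable_fun setT e ->
  measurable_fun setT (fun w => v w ord0 i).
Proof. by move=> ve; rewrite (_ : (fun w => v w ord0 i) = e) //; apply/funext. Qed.

End H.

Theorem lemma4 (R : realType) (n : nat)
  (d : measure_display) (Omega : measurableType d) (P : probability Omega R)
  (X : set 'rV[R]_n) (DX c Lf sigmaf beta delta a : R)
  (F : 'rV[R]_n -> Omega -> R) (Fd : 'rV[R]_n -> Omega -> 'rV[R]_n)
  (f : 'rV[R]_n -> R) (fd : 'rV[R]_n -> 'rV[R]_n) :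
  X !=set0 -> convex_set X -> compact X ->
  (forall x1 x2, X x1 -> X x2 -> enorm (x1 - x2) <= DX) ->
  0 < c <= 1 ->
  (* F(., xi) convex; measurable oracle outputs *)
  (forall w, convex_function setT (F ^~ w)) ->
  (forall x, measurable_fun setT (F x)) ->
  (forall x (i : 'I_n), measurable_fun setT (fun w => Fd x w ord0 i)) ->
  (* f(x) = E[F(x, xi)] *)
  (forall x, X x -> P.-integrable setT (fun w => (F x w)%:E)) ->
  (forall x, X x -> (\int[P]_w (F x w)%:E = (f x)%:E)%E) ->
  (* f'(x) is a subgradient of f, and F'(x, xi) is unbiased for it *)
  (forall x u, X x -> X u -> f x + dotv (fd x) (u - x) <= f u) ->
  (forall x (i : 'I_n), X x ->
     P.-integrable setT (fun w => (Fd x w ord0 i)%:E) /\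
     (\int[P]_w (Fd x w ord0 i)%:E = (fd x ord0 i)%:E)%E) ->
  (* f is L_f-Lipschitz on X (values and subgradients) *)
  (forall x1 x2, X x1 -> X x2 -> `|f x1 - f x2| <= Lf * enorm (x1 - x2)) ->
  (forall x, X x -> enorm (fd x) <= Lf) ->
  (* variance bounds *)
  (forall x, X x ->
     (\int[P]_w (sqnorm (Fd x w - fd x))%:E <= (sigmaf ^+ 2)%:E)%E) ->
  (forall x, X x ->
     (\int[P]_w ((F x w - f x) ^+ 2)%:E <= (beta ^+ 2)%:E)%E) ->
  0 < delta ->
  (* Y_delta = [a, a + 2 (L_f D_X + delta)] contains f(X) *)
  (forall x, X x -> a <= f x <= a + 2 * (Lf * DX + delta)) ->
  forall x y z lam,
  X x -> a <= y <= a + 2 * (Lf * DX + delta) -> 0 < z -> 0 <= lam <= 1 ->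
  (* (a) *)
  (\int[P]_w ((Ly c z lam y (F x w)) ^+ 2)%:E <=
     (12 * c ^+ 2 / z ^+ 2 * (beta ^+ 2 + 4 * (Lf * DX + delta) ^+ 2) + 3)%:E)%E
  /\
  (* (b) *)
  (\int[P]_w ((Llam y (F x w)) ^+ 2)%:E <=
     (2 * beta ^+ 2 + 8 * (Lf * DX + delta) ^+ 2)%:E)%E
  /\
  (* (d) *)
  (forall Mf : R,
     (forall x', X x' ->
        (\int[P]_w ((pos_part (F x' w - f x')) ^+ 4)%:E <= (Mf ^+ 4)%:E)%E) ->
     (\int[P]_w ((Lz c z y (F x w)) ^+ 2)%:E <=
        (12 * c ^+ 2 / z ^+ 4 * (Mf ^+ 4 + 16 * (Lf * DX + delta) ^+ 4)
         + 3 * c ^+ 2 / 16)%:E)%E)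
  /\
  (* (c) *)
  (forall LG : R,
     (forall x', X x' ->
        (\int[P]_w (sqnorm (Gd (F x' w) (f x') (Fd x' w) (fd x')))%:E
           <= (LG ^+ 2)%:E)%E) ->
     (\int[P]_w (sqnorm (Lx c z lam y (F x w) (Fd x w)))%:E <=
        (3 * c ^+ 2 / z ^+ 2 *
           (LG ^+ 2 + 4 * Lf ^+ 2 * beta ^+ 2
            + 64 * (Lf ^+ 2 + sigmaf ^+ 2) * (Lf * DX + delta) ^+ 2)
         + 12 * (Lf ^+ 2 + sigmaf ^+ 2))%:E)%E).

Proof.
move=> X0 cX kX hD hc cvx mF mFd intF EF subg intFd Lip fdL sig bet hdel hY
  x y z lam Xx hy hz hlam.
have /andP[hfa hfb] := hY x Xx.
have /andP[hya hyb] := hy.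
pose K := Lf * DX + delta.
have K0 : 0 <= K by rewrite /K; lra.
have hK : - (2 * K) <= f x - y <= 2 * K by rewrite /K; apply/andP; split; lra.
have hK' : f x - y <= 2 * K by rewrite /K; lra.
have /andP[c0 c1] := hc.
have mFx := mF x.
have E0 : forall (T' : measurableType d) (Q : probability T' R),
    (\int[Q]_w ((fun _ : T' => 0 : R) w)%:E <= (0:R)%:E)%E.
  by move=> T' Q; rewrite /= Ecst.
have m0 : measurable_fun [set: Omega] (fun _ : Omega => 0 : R) by exact: measurable_cst.
have z0 : z != 0 by rewrite gt_eqF.
set A := 2 * c / z.
set Q := c ^+ 2 / z ^+ 2.
have A0 : 0 <= A by rewrite /A; apply: divr_ge0; [apply: mulr_ge0|]; lra.
have AQ : A ^+ 2 = 4 * Q by rewrite /A /Q; field.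
have Q0 : 0 <= Q by rewrite /Q; apply: divr_ge0; exact: sqr_ge0.
have QK : 0 <= Q * K ^+ 2 by apply: mulr_ge0 => //; exact: sqr_ge0.
have K2 : 0 <= K ^+ 2 by exact: sqr_ge0.
have K4 : 0 <= K ^+ 4 by exact: exprn_ge0.
have L2 : 0 <= Lf ^+ 2 by exact: sqr_ge0.
have QL : 0 <= Q * Lf ^+ 2 by exact: mulr_ge0.
have QKL : 0 <= Q * K ^+ 2 * Lf ^+ 2 by exact: mulr_ge0.
split; [|split; [|split]].
-
  apply: (@int_bound _ _ _ P (fun w => Ly c z lam y (F x w) ^+ 2)
     (fun w => (F x w - f x) ^+ 2) (fun _ => 0) (fun _ => 0)
     (12 * Q) 0 0 (12 * Q * (4 * K ^+ 2) + 3) (beta ^+ 2) 0 0) => //.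
  + apply: measurable_funX; rewrite /Ly.
    apply: measurable_funB; last exact: measurable_cst.
    apply: measurable_funD; last exact: measurable_cst.
    apply: measurable_funM; first exact: measurable_cst.
    by apply: meas_pp; apply: measurable_funB => //; exact: measurable_cst.
  + by apply: measurable_funX; apply: measurable_funB => //; exact: measurable_cst.
  + by move=> w; exact: sqr_ge0.
  + by move=> w; exact: sqr_ge0.
  + by nra.
  + by nra.
  + move=> w; rewrite !mul0r !addr0 /Ly -/A.
    exact: ra.
  + by apply: bet.
  + rewrite !mul0r !addr0 /Q; rewrite /K; apply: eq_leR; ring.
-
  apply: (@int_bound _ _ _ P (fun w => Llam y (F x w) ^+ 2)
     (fun w => (F x w - f x) ^+ 2) (fun _ => 0) (fun _ => 0)
     2 0 0 (8 * K ^+ 2) (beta ^+ 2) 0 0) => //.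
  + by apply: measurable_funX; rewrite /Llam; apply: measurable_funB => //; exact: measurable_cst.
  + by apply: measurable_funX; apply: measurable_funB => //; exact: measurable_cst.
  + by move=> w; exact: sqr_ge0.
  + by move=> w; exact: sqr_ge0.
  + by nra.
  + move=> w; rewrite !mul0r !addr0 /Llam; exact: rb.
  + by apply: bet.
  + rewrite !mul0r !addr0; rewrite /K; apply: eq_leR; ring.
-
  move=> Mf hM.
  set t := c / z ^+ 2.
  have t0 : 0 <= t by rewrite /t; apply: divr_ge0; [lra | exact: sqr_ge0].
  apply: (@int_bound _ _ _ P (fun w => Lz c z y (F x w) ^+ 2)
     (fun w => pos_part (F x w - f x) ^+ 4) (fun _ => 0) (fun _ => 0)
     (12 * t ^+ 2) 0 0 (12 * t ^+ 2 * (16 * K ^+ 4) + 3 * (c / 4) ^+ 2)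
     (Mf ^+ 4) 0 0) => //.
  + apply: measurable_funX; rewrite /Lz.
    apply: measurable_funD; last exact: measurable_cst.
    apply: measurable_funM; first exact: measurable_cst.
    apply: measurable_funX.
    by apply: meas_pp; apply: measurable_funB => //; exact: measurable_cst.
  + apply: measurable_funX.
    by apply: meas_pp; apply: measurable_funB => //; exact: measurable_cst.
  + by move=> w; exact: sqr_ge0.
  + by move=> w; apply: exprn_ge0; exact: pp_ge0.
  + by nra.
  + by nra.
  + move=> w; rewrite !mul0r !addr0 /Lz -/t.
    apply: rd => //; lra.
  + by apply: hM.
  + rewrite !mul0r !addr0 /t; rewrite /K; apply: eq_leR; field; exact: z0.
-
  move=> LG hG.
  have hfd : sqnorm (fd x) <= Lf ^+ 2.
    have := fdL x Xx; rewrite /enorm => hs.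
    have s0 := @sqnorm_ge0 _ _ (fd x).
    have := sqr_sqrtr s0.
    have := sqrtr_ge0 (sqnorm (fd x)).
    nra.
  apply: (@int_bound _ _ _ P (fun w => sqnorm (Lx c z lam y (F x w) (Fd x w)))
     (fun w => sqnorm (Gd (F x w) (f x) (Fd x w) (fd x)))
     (fun w => (F x w - f x) ^+ 2) (fun w => sqnorm (Fd x w - fd x))
     (3 * Q) (12 * Q * Lf ^+ 2) (192 * Q * K ^+ 2 + 12)
     ((192 * Q * K ^+ 2 + 12) * Lf ^+ 2)
     (LG ^+ 2) (beta ^+ 2) (sigmaf ^+ 2)) => //.
  + apply: meas_sqnorm => i.
    eapply meas_coord; first (move=> w; rewrite /Lx !mxE; reflexivity).
    apply: measurable_funD; apply: measurable_funM => //; try exact: measurable_cst.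
    apply: measurable_funM; first exact: measurable_cst.
    by apply: meas_pp; apply: measurable_funB => //; exact: measurable_cst.
  + apply: meas_sqnorm => i.
    eapply meas_coord; first (move=> w; rewrite /Gd !mxE; reflexivity).
    apply: measurable_funM.
      apply: measurable_funM; first exact: measurable_cst.
      by apply: meas_pp; apply: measurable_funB => //; exact: measurable_cst.
    by apply: measurable_funB => //; exact: measurable_cst.
  + by apply: measurable_funX; apply: measurable_funB => //; exact: measurable_cst.
  + apply: meas_sqnorm => i.
    eapply meas_coord; first (move=> w; rewrite !mxE; reflexivity).
    by apply: measurable_funB => //; exact: measurable_cst.
  + by move=> w; exact: sqnorm_ge0.
  + by move=> w; exact: sqnorm_ge0.
  + by move=> w; exact: sqr_ge0.
  + by move=> w; exact: sqnorm_ge0.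
  + by nra.
  + by nra.
  + by nra.
  + by nra.
  + move=> w; rewrite /Lx -/A.
    exact: rc.
  + by apply: hG.
  + by apply: bet.
  + by apply: sig.
  + rewrite /Q; rewrite /K; apply: eq_leR; ring.
Qed.
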